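(* Let $a,b,c,d\ge1$ be integers and let $$M=\begin{bmatrix}a&-1&-1&-1\\-1&b&-1&-1\\-1&-1&c&-1\\-1&-1&-1&d\end{bmatrix}.$$ If $\det M=0$, then $\min\{a,b,c,d\}\le3$. *)

(* Defs.v *)
From mathcomp Require Import all_boot all_order all_algebra.
Set Implicit Arguments. Unset Strict Implicit. Unset Printing Implicit Defensive.
Import GRing.Theory Num.Theory.
Local Open Scope ring_scope.

Definition Mabcd (a b c d : int) : 'M[int]_4 :=
  \matrix_(i < 4, j < 4)
    if i == j then [:: a; b; c; d]`_i else -1.

(* Main.v *)
Require Import Defs.
From mathcomp Require Import all_boot all_order all_algebra ring lra.
Import Order.TTheory GRing.Theory Num.Theory.
Local Open Scope ring_scope.

Lemma detE (a b c d : int) : \det (Mabcd a b c d) =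
  (a+1)*(b+1)*(c+1)*(d+1) - (a+1)*(b+1)*(c+1) - (a+1)*(b+1)*(d+1) - (a+1)*(c+1)*(d+1) - (b+1)*(c+1)*(d+1).
Proof.
rewrite (expand_det_row _ ord0) !big_ord_recl big_ord0 /cofactor.
rewrite !(expand_det_row _ ord0) !big_ord_recl !big_ord0 /cofactor.
rewrite !(expand_det_row _ ord0) !big_ord_recl !big_ord0 /cofactor.
rewrite !det_mx11 !mxE /= /bump /=.
ring.
Qed.

Theorem lemma3p5 (a b c d : int) :
  1 <= a -> 1 <= b -> 1 <= c -> 1 <= d ->
  \det (Mabcd a b c d) = 0 ->
  Num.min (Num.min a b) (Num.min c d) <= 3.
Proof.
move=> ha hb hc hd; rewrite detE => H.
rewrite leNgt; apply/negP => Hm.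
move: Hm; rewrite !lt_min => /andP[/andP[Ha Hb] /andP[Hc Hd]].
have Ha' : 0 <= a - 4 by rewrite subr_ge0.
have Hb' : 0 <= b - 4 by rewrite subr_ge0.
have Hc' : 0 <= c - 4 by rewrite subr_ge0.
have Hd' : 0 <= d - 4 by rewrite subr_ge0.
move: H Ha' Hb' Hc' Hd'.
set p := a - 4; set q := b - 4; set r := c - 4; set s := d - 4.
have -> : a = p + 4 by rewrite /p; ring.
have -> : b = q + 4 by rewrite /q; ring.
have -> : c = r + 4 by rewrite /r; ring.
have -> : d = s + 4 by rewrite /s; ring.
clearbody p q r s => H hp hq hr hs.
have : 0 < p*q*r*s + 4*(p*q*r + p*q*s + p*r*s + q*r*s) + 15*(p*q+p*r+p*s+q*r+q*s+r*s) + 50*(p+q+r+s) + 125.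
  have h1 : 0 <= p*q*r*s by rewrite !mulr_ge0.
  have h2 : 0 <= p*q*r + p*q*s + p*r*s + q*r*s by rewrite !addr_ge0 // !mulr_ge0.
  have h3 : 0 <= p*q+p*r+p*s+q*r+q*s+r*s by rewrite !addr_ge0 // !mulr_ge0.
  have h4 : 0 <= p+q+r+s by rewrite !addr_ge0.
  lra.
have -> : p*q*r*s + 4*(p*q*r + p*q*s + p*r*s + q*r*s) + 15*(p*q+p*r+p*s+q*r+q*s+r*s) + 50*(p+q+r+s) + 125 = 0.
  by rewrite -H; ring.
by [].
Qed.
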